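(* Fix an integer $a\ge 2$ and an integer $k\ge 2$. Let $n\to\infty$ and let $m=m(n)=o\!\left(n^{1+1/k}\right)$. Then all hypergraphs $H\in\mathcal{H}(a,n,m)$, except for $o\!\left(\binom{\binom{n}{a}}{m}\right)$ of them, contain at most $n$ Berge-cycles of length at most $k$.
   Context: $\mathcal{H}(a,n,m)$ is the family of all $a$-uniform hypergraphs on vertex set $[n]$ with exactly $m$ hyperedges; $|\mathcal{H}(a,n,m)|=\binom{\binom{n}{a}}{m}$. A Berge-cycle of length $l\ge 2$ consists of $l$ distinct hyperedges $e_1,\dots,e_l$ and $l$ distinct vertices $v_1,\dots,v_l$ with $v_i\in e_i\cap e_{i+1}$ for $i=1,\dots,l$ (indices modulo $l$). *)

(* Defs.v *)
From mathcomp Require Import all_boot.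
Set Implicit Arguments. Unset Strict Implicit. Unset Printing Implicit Defensive.

Definition in_Hanm (a n m : nat) (H : {set {set 'I_n}}) : bool :=
  [forall e in H, #|e| == a] && (#|H| == m).

Definition berge_cycle (n l : nat) (H : {set {set 'I_n}})
    (c : (l.-tuple {set 'I_n} * l.-tuple 'I_n)%type) : bool :=
  [&& uniq c.1, uniq c.2, all (fun e => e \in H) c.1 &
      [forall i : 'I_l, (tnth c.2 i \in tnth c.1 i) && (tnth c.2 i \in tnth c.1 (ordS i))]].

(* Number of Berge-cycles of length l in H (counted as pairs of sequences). *)
Definition num_berge (n l : nat) (H : {set {set 'I_n}}) : nat :=
  #|[set c : (l.-tuple {set 'I_n} * l.-tuple 'I_n)%type | berge_cycle H c]|.

Definition num_short_berge (n k : nat) (H : {set {set 'I_n}}) : nat :=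
  \sum_(2 <= l < k.+1) num_berge l H.

Definition num_bad (a k n m : nat) : nat :=
  #|[set H : {set {set 'I_n}} | in_Hanm a m H && (n < num_short_berge k H)]|.

(* Main.v *)
Require Import Defs.
From mathcomp Require Import all_boot all_algebra ring zify.
Set Implicit Arguments. Unset Strict Implicit. Unset Printing Implicit Defensive.

Lemma bin_ratio (N M l : nat) : l <= M -> M <= N ->
  'C(N - l, M - l) * N ^ l <= 'C(N, M) * M ^ l.
Proof.
move=> + MN; elim: l => [|l IH] lM; first by rewrite !subn0 !expn0.
have IH' := IH (ltnW lM).
have E := mul_bin_diag (N - l) (M - l.+1).
have h1 : (N - l).-1 = N - l.+1 by lia.
have h2 : (M - l.+1).+1 = M - l by lia.
rewrite h1 h2 in E.
set C' := 'C(N - l.+1, M - l.+1) in E *.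
set C := 'C(N - l, M - l) in E IH'.
clearbody C C'.
have key : C' * N <= C * M.
  have H3 : C' * N * (M - l) <= C * M * (M - l).
    have : N * (M - l) <= M * (N - l) by nia.
    move=> h; have h' := leq_mul (leqnn C') h.
    have e2 : C' * (M * (N - l)) = C * M * (M - l).
      by have := congr1 (muln M) E; nia.
    by rewrite -e2 -mulnA.
  by rewrite leq_pmul2r in H3; [|lia].
rewrite expnS mulnA.
apply: (leq_trans (leq_mul key (leqnn _))).
rewrite expnS (mulnC M) mulnA -mulnA (mulnC M) mulnA.
by rewrite leq_mul2r IH' orbT.
Qed.


Definition good (n a l : nat) (c : (l.-tuple {set 'I_n} * l.-tuple 'I_n)%type) : bool :=
  [&& uniq c.1, uniq c.2, all (fun e : {set 'I_n} => #|e| == a) c.1 &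
      [forall i : 'I_l, (tnth c.2 i \in tnth c.1 i) && (tnth c.2 i \in tnth c.1 (ordS i))]].

Lemma berge_good n a M l (H : {set {set 'I_n}}) (c : (l.-tuple {set 'I_n} * l.-tuple 'I_n)%type) :
  in_Hanm a M H -> berge_cycle H c -> good a c.
Proof.
case/andP=> /forall_inP Ha _ /and4P [u1 u2 /allP aH fa].
rewrite /good u1 u2 fa /= andbT; apply/allP=> e /aH eH; exact: Ha.
Qed.

Lemma cardU n a : #|[set e : {set 'I_n} | #|e| == a]| = 'C(n, a).
Proof. by rewrite card_draws card_ord. Qed.

Lemma per_c n a M l (c : (l.-tuple {set 'I_n} * l.-tuple 'I_n)%type)
  (binr : forall N, l <= M -> M <= N -> 'C(N - l, M - l) * N ^ l <= 'C(N, M) * M ^ l) :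
  #|[set H : {set {set 'I_n}} | in_Hanm a M H && berge_cycle H c]| * 'C(n, a) ^ l
    <= good a c * ('C('C(n, a), M) * M ^ l).
Proof.
set T := [set H | _].
case g: (good a c); last first.
  have -> : T = set0.
    apply/setP=> H; rewrite !inE; apply/negP=> /andP [h1 h2].
    by rewrite (berge_good h1 h2) in g.
  by rewrite cards0.
rewrite mul1n.
case: (set_0Vmem T) => [-> | [H0 HT0]]; first by rewrite cards0.
move: g => /and4P [u1 u2 /allP aS _].
set U := [set e : {set 'I_n} | #|e| == a].
set S := [set e in (c.1 : seq _)].
have cS : #|S| = l by rewrite cardsE (card_uniqP u1) size_tuple.
have SU : S \subset U by apply/subsetP=> e; rewrite !inE => /aS.
have TP : forall H, H \in T -> [/\ H \subset U, #|H| = M & S \subset H].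
  move=> H; rewrite inE => /andP [/andP [/forall_inP Ha /eqP HM]] /and4P [_ _ /allP cH _].
  split=> //.
    by apply/subsetP=> e eH; rewrite inE Ha.
  by apply/subsetP=> e; rewrite inE => /cH.
have [H0U H0M SH0] := TP _ HT0.
have lM : l <= M by rewrite -cS -H0M subset_leq_card.
have MN : M <= 'C(n, a) by rewrite -H0M -(cardU n a) subset_leq_card.
apply: leq_trans (binr _ lM MN); rewrite leq_mul2r; apply/orP; right.
have inj : {in T &, injective (fun H => H :\: S)}.
  move=> H1 H2 /TP [_ _ s1] /TP [_ _ s2] e.
  by rewrite -(setID H1 S) -(setID H2 S) (setIidPr s1) (setIidPr s2) e.
rewrite -(card_in_imset inj).
have -> : 'C('C(n, a) - l, M - l) = #|[set B : {set {set 'I_n}} | B \subset U :\: S & #|B| == M - l]|.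
  by rewrite cards_draws cardsD (setIidPr SU) cS cardU.
apply: subset_leq_card; apply/subsetP=> B; case/imsetP=> H /TP [HU HM SH] ->.
rewrite inE; apply/andP; split; first by apply: setSD.
by rewrite cardsD (setIidPr SH) HM cS.
Qed.


Lemma ordS_neq l (i : 'I_l) : 2 <= l -> ordS i != i.
Proof.
move=> hl; apply/eqP => /(congr1 val) /=.
have := ltn_ord i; case: (ltngtP i.+1 l) => h.
- by rewrite modn_small //; lia.
- lia.
- by rewrite h modnn; lia.
Qed.

Lemma card_good n a l : 2 <= l ->
  #|[set c : (l.-tuple {set 'I_n} * l.-tuple 'I_n)%type | good a c]| <= n ^ l * 'C(n, a - 2) ^ l.
Proof.
move=> hl.
set G := [set c | _].
pose P (c : (l.-tuple {set 'I_n} * l.-tuple 'I_n)%type) (i : 'I_l) :=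
  [set tnth c.2 i; tnth c.2 (ordS i)].
pose f (c : (l.-tuple {set 'I_n} * l.-tuple 'I_n)%type) :=
  ([ffun i => tnth c.2 i], [ffun i => tnth c.1 (ordS i) :\: P c i]).
have gP : forall c, c \in G -> forall i, P c i \subset tnth c.1 (ordS i).
  move=> c; rewrite inE => /and4P [_ _ _ /forallP h] i.
  case/andP: (h i) => h1 h2; case/andP: (h (ordS i)) => h3 _.
  by apply/subsetP=> x; rewrite !inE => /orP [] /eqP ->.
have inj : {in G &, injective f}.
  move=> [c1 c2] [d1 d2] g1 g2 [] /ffunP e2 /ffunP e1.
  have E2 : c2 = d2 by apply: eq_from_tnth => i; have := e2 i; rewrite !ffunE.
  subst d2; congr pair; apply: eq_from_tnth => j.
  rewrite -(ord_predK j); set i := ord_pred j.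
  have := e1 i; rewrite !ffunE => e.
  rewrite -(setID (tnth c1 (ordS i)) (P (c1, c2) i)) -(setID (tnth d1 (ordS i)) (P (d1, c2) i)).
  by rewrite (setIidPr (gP _ g1 i)) (setIidPr (gP _ g2 i)) e.
rewrite -(card_in_imset inj).
set X := [set e : {set 'I_n} | #|e| == a - 2].
have -> : n ^ l * 'C(n, a - 2) ^ l =
   #|setX [set: {ffun 'I_l -> 'I_n}] [set g : {ffun 'I_l -> {set 'I_n}} | g \in ffun_on X]|.
  by rewrite cardsX cardsT card_ffun cardsE card_ffun_on card_ord card_draws !card_ord.
apply: subset_leq_card; apply/subsetP=> y; case/imsetP=> c gc ->.
rewrite !inE /=; apply/ffun_onP => i; rewrite ffunE inE.
move: (gc); rewrite inE => /and4P [u1 u2 /allP aS _].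
rewrite cardsD (setIidPr (gP _ gc i)) cards2.
have -> : (tnth c.2 i != tnth c.2 (ordS i)).
  apply/eqP => /(elimT (tuple_uniqP _) u2) /eqP; rewrite eq_sym; apply/negP; exact: ordS_neq.
by rewrite (eqP (aS _ (mem_tnth (ordS i) c.1))).
Qed.


Lemma card_sum (T : finType) (P : pred T) : #|[set x | P x]| = \sum_x (P x : nat).
Proof.
rewrite -sum1_card big_mkcond; apply: eq_bigr => x _; rewrite inE; by case: (P x).
Qed.

Lemma sum_l n a M l : 2 <= l ->
  (\sum_(H : {set {set 'I_n}} | in_Hanm a M H) num_berge l H) * 'C(n, a) ^ l
    <= n ^ l * 'C(n, a - 2) ^ l * ('C('C(n, a), M) * M ^ l).
Proof.
move=> hl.
have E : \sum_(H : {set {set 'I_n}} | in_Hanm a M H) num_berge l H =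
   \sum_(c : (l.-tuple {set 'I_n} * l.-tuple 'I_n)%type)
      #|[set H : {set {set 'I_n}} | in_Hanm a M H && berge_cycle H c]|.
  rewrite /num_berge.
  under eq_bigr => H _ do rewrite card_sum.
  rewrite exchange_big /=; apply: eq_bigr => c _.
  by rewrite card_sum big_mkcond /=; apply: eq_bigr => H _; case: in_Hanm.
rewrite E big_distrl /=.
apply: leq_trans (leq_mul (card_good n a hl) (leqnn _)).
rewrite card_sum big_distrl /=; apply: leq_sum => c _.
apply: per_c => N; exact: bin_ratio.
Qed.


Lemma binK n a : 2 <= a -> a <= n ->
  'C(n, a - 2) * ((n - a + 2) * (n - a + 1)) = 'C(n, a) * (a * (a - 1)).
Proof.
move=> ha han.
have e1 := mul_bin_left n (a - 2).
have e2 := mul_bin_left n (a - 1).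
have h1 : (a - 2).+1 = a - 1 by lia.
have h2 : (a - 1).+1 = a by lia.
rewrite h1 in e1; rewrite h2 in e2.
have h3 : n - (a - 2) = n - a + 2 by lia.
have h4 : n - (a - 1) = n - a + 1 by lia.
rewrite h3 in e1; rewrite h4 in e2.
have -> : 'C(n, a - 2) * ((n - a + 2) * (n - a + 1)) = ((n - a + 2) * 'C(n, a - 2)) * (n - a + 1) by ring.
rewrite -e1.
have -> : (a - 1) * 'C(n, a - 1) * (n - a + 1) = (a - 1) * ((n - a + 1) * 'C(n, a - 1)) by ring.
rewrite -e2; ring.
Qed.

Lemma final_l n a M l D : 2 <= a -> 2 <= l -> 2 * a <= n ->
  D * (4 * (a * (a - 1)) * M) ^ l <= n ^ l.+1 ->
  (\sum_(H : {set {set 'I_n}} | in_Hanm a M H) num_berge l H) * D <= 'C('C(n, a), M) * n.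
Proof.
move=> ha hl hn hD.
set S := \sum_(H | _) _.
pose N := 'C(n, a); pose K := 'C(n, a - 2); pose C := 'C(N, M).
pose L := (n - a + 2) * (n - a + 1); pose A := a * (a - 1).
have h0 := sum_l n a M hl; rewrite -/S -/N -/K -/C in h0.
have NP : 0 < N by rewrite bin_gt0; lia.
have KL : K * L = N * A by apply: binK; lia.
have e : K ^ l * L ^ l = N ^ l * A ^ l by rewrite -!expnMn KL.
have h1 : S * L ^ l <= n ^ l * A ^ l * (C * M ^ l).
  rewrite -(@leq_pmul2l (N ^ l)); last by rewrite expn_gt0 NP.
  have := leq_mul h0 (leqnn (L ^ l)).
  have -> : n ^ l * K ^ l * (C * M ^ l) * L ^ l = (K ^ l * L ^ l) * (n ^ l * (C * M ^ l)) by ring.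
  rewrite e (_ : N ^ l * (S * L ^ l) = S * N ^ l * L ^ l); last by ring.
  move=> h; apply: leq_trans h _; rewrite leq_eqVlt; apply/orP; left; apply/eqP; ring.
have nn : n * n <= 4 * L.
  have hx : n <= 2 * (n - a + 2) by lia.
  have hy : n <= 2 * (n - a + 1) by lia.
  apply: leq_trans (leq_mul hx hy) _; rewrite /L leq_eqVlt; apply/orP; left; apply/eqP; ring.
have h2 : n ^ l * n ^ l <= 4 ^ l * L ^ l by rewrite -!expnMn leq_exp2r //; lia.
have nP : 0 < n ^ l by rewrite expn_gt0; apply/orP; left; lia.
have h3 : S * n ^ l <= (4 * A * M) ^ l * C.
  rewrite -(leq_pmul2r nP).
  apply: leq_trans (_ : S * (4 ^ l * L ^ l) <= _).
    by rewrite -mulnA leq_mul2l h2 orbT.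
  have := leq_mul (leqnn (4 ^ l)) h1.
  have -> : (4 * A * M) ^ l * C * n ^ l = 4 ^ l * (n ^ l * A ^ l * (C * M ^ l)) by rewrite !expnMn; ring.
  move=> h; apply: leq_trans h; rewrite leq_eqVlt; apply/orP; left; apply/eqP; ring.
rewrite -(leq_pmul2r nP).
have u := leq_mul h3 (leqnn D).
have v := leq_mul (leqnn C) hD.
have E1 : S * D * n ^ l = S * n ^ l * D by ring.
have E2 : (4 * A * M) ^ l * C * D = C * (D * (4 * A * M) ^ l) by ring.
have E3 : C * n ^ l.+1 = C * n * n ^ l by rewrite expnS; ring.
rewrite E1; apply: leq_trans u _; rewrite E2 -E3; exact: v.
Qed.


Lemma bound_l n M l k B D : 0 < l -> l <= k -> 0 < B -> 0 < n -> D * B ^ k <= n ->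
  D * B ^ k * M ^ k <= n ^ k.+1 -> D * (B * M) ^ l <= n ^ l.+1.
Proof.
move=> l0 lk B0 n0 hD hM.
have Bl : B ^ l <= B ^ k by apply: leq_pexp2l.
case: (leqP M n) => hMn.
  have Ml : M ^ l <= n ^ l by rewrite leq_exp2r.
  rewrite expnMn mulnA expnS.
  apply: leq_trans (leq_mul (leq_mul (leqnn D) Bl) Ml) _.
  by rewrite leq_mul2r hD orbT.
have Ml : n ^ (k - l) <= M ^ (k - l).
  case: (posnP (k - l)) => [-> | kl]; first by [].
  by rewrite leq_exp2r // ltnW.
have ek : k = l + (k - l) by lia.
rewrite -(@leq_pmul2r (n ^ (k - l))); last by rewrite expn_gt0 n0.
rewrite -expnD (_ : l.+1 + (k - l) = k.+1); last by lia.
apply: leq_trans hM.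
have eM : M ^ k = M ^ l * M ^ (k - l) by rewrite -expnD -ek.
rewrite eM.
have h := leq_mul (leq_mul (leq_mul (leqnn D) Bl) (leqnn (M ^ l))) Ml.
apply: leq_trans _ (leq_trans h _).
  rewrite leq_eqVlt; apply/orP; left; apply/eqP; rewrite expnMn; ring.
rewrite leq_eqVlt; apply/orP; left; apply/eqP; ring.
Qed.


Lemma badsum a k n M :
  num_bad a k n M * n.+1 <=
  \sum_(2 <= l < k.+1) \sum_(H : {set {set 'I_n}} | in_Hanm a M H) num_berge l H.
Proof.
rewrite (exchange_big_dep xpredT) //=.
rewrite /num_bad -sum1_card big_mkcond big_distrl /= [X in _ <= X]big_mkcond /=.
apply: leq_sum => H _; rewrite inE.
case: (in_Hanm a M H) => //=.
rewrite /num_short_berge.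
by case: ltnP => //= h; rewrite mul1n.
Qed.

Theorem lemma14 (a k : nat) (m : nat -> nat) :
  2 <= a -> 2 <= k ->
  (forall d : nat, 0 < d -> exists N : nat, forall n : nat, N <= n ->
     d * (m n) ^ k <= n ^ k.+1) ->
  forall d : nat, 0 < d -> exists N : nat, forall n : nat, N <= n ->
     d * num_bad a k n (m n) <= 'C('C(n, a), m n).
Proof.
move=> ha hk hm d d0.
pose B := 4 * (a * (a - 1)); pose D := d * k.
have B0 : 0 < B by rewrite /B; nia.
have D0 : 0 < D by rewrite /D; nia.
have hd : 0 < D * B ^ k by rewrite muln_gt0 D0 expn_gt0 B0.
have [N0 hN0] := hm _ hd.
exists (N0 + D * B ^ k + 2 * a) => n hn.
set M := m n.
have hM := hN0 n (leq_trans (leq_addr _ _) (leq_trans (leq_addr _ _) hn)).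
rewrite -/M in hM.
set C := 'C('C(n, a), M).
have hl : forall l, 2 <= l < k.+1 ->
    (\sum_(H : {set {set 'I_n}} | in_Hanm a M H) num_berge l H) * D <= C * n.
  move=> l /andP [l2 lk].
  apply: final_l => //; first by lia.
  apply: (bound_l (k:=k)) => //; try lia.
  by move: hn; rewrite /B; lia.
have hs := badsum a k n M.
have hsum : (\sum_(2 <= l < k.+1) \sum_(H : {set {set 'I_n}} | in_Hanm a M H) num_berge l H) * D
      <= (k.+1 - 2) * (C * n).
  rewrite big_distrl /= -sum_nat_const_nat.
  rewrite big_nat_cond [X in _ <= X]big_nat_cond.
  apply: leq_sum => j /andP [/andP [h1 h2] _]; apply: hl; by rewrite h1 h2.
have h3 := leq_trans (leq_mul hs (leqnn D)) hsum.
set nb := num_bad a k n M in h3 *.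
have h4 : nb * n.+1 * d * k <= k * (C * n).
  apply: leq_trans (_ : (k.+1 - 2) * (C * n) <= _); last by rewrite leq_mul2r; apply/orP; right; lia.
  by rewrite -mulnA.
have h5 : nb * n.+1 * d <= C * n.
  by rewrite -(@leq_pmul2l k) ?(ltnW hk) // mulnC.
have n0 : 0 < n by lia.
rewrite -(@leq_pmul2r n) //.
apply: leq_trans h5.
have -> : d * nb * n = (nb * n) * d by ring.
by rewrite leq_mul2r leq_mul2l leqnSn !orbT.
Qed.
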